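(* Let $\mathcal M\subseteq\mathcal O_{\mathbb C^2,0}^2$ (coordinates $x,y$) be the submodule generated by the columns of $\begin{bmatrix}x&0&y\\ y&x&0\end{bmatrix}$, and let $h=(x,3y)$. Then $h\in(\mathcal M_{S_3})_0$ but $h\notin(\mathcal M_{S_1})_0$. In particular, $\mathcal M_{S_3}\not\subseteq\mathcal M_{S_1}$ in general.
   Context: $\mathcal M$ has generic rank $2$. $\pi_1,\pi_2:\mathbb C^2\times\mathbb C^2\to\mathbb C^2$ are the projections. For $g\in\mathcal O^q$, $g_D=(g\circ\pi_1,g\circ\pi_2)$; for a submodule or ideal $N$, $N_D$ is generated by $\{g_D:g\in N\}$. $\overline{\cdot}$ denotes integral closure. For an ideal $I\subseteq\mathcal O_{\mathbb C^2,0}$, its Lipschitz saturation is $I_S=\{f:f_D\in\overline{I_D}\text{ at }(0,0)\}$. $J_k(N)$ is the ideal of $k\times k$ minors of a matrix of generators of $N$, $(h,\mathcal M)$ the module generated by $h$ and $\mathcal M$. Definitions: $(\mathcal M_{S_1})_0=\{h:h_D\in\overline{\mathcal M_D}\text{ at }(0,0)\}$; $(\mathcal M_{S_3})_0=\{h:J_2((h,\mathcal M))\subseteq(J_2(\mathcal M))_S\text{ at }0\}$. *)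

(* Defs.v *)
(* Germs are represented by everywhere-defined functions,
   equalities of germs are "equal on a polydisc around the base point". *)
From HB Require Import structures.
From mathcomp Require Import all_boot all_order all_algebra.
From mathcomp Require Import complex.
From mathcomp Require Import reals.
Set Implicit Arguments. Unset Strict Implicit. Unset Printing Implicit Defensive.
Import Order.TTheory GRing.Theory Num.Theory.
Local Open Scope ring_scope.
Local Open Scope complex_scope.

Section Germs.
Variable R : realType.
Local Notation C := (R[i]).

Definition pt (n : nat) := 'I_n -> C.

Definition near_pt n (p : pt n) (e : C) (z : pt n) := forall i, `|z i - p i| < e.

Definition cdiff (g : C -> C) (t0 : C) :=
  exists l : C, forall eps : C, 0 < eps -> exists d : C, 0 < d /\
    forall t : C, 0 < `|t| < d -> `|(g (t0 + t) - g t0) / t - l| < eps.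

Definition cont_at n (f : pt n -> C) (z : pt n) :=
  forall eps : C, 0 < eps -> exists d : C, 0 < d /\
    forall w, near_pt z d w -> `|f w - f z| < eps.

Definition shift n (z : pt n) (i : 'I_n) (t : C) : pt n :=
  fun j => if j == i then z j + t else z j.

(* f is holomorphic on a neighbourhood of p: continuous and holomorphic in
   each variable separately (standard definition of holomorphy in C^n) *)
Definition holo_at n (p : pt n) (f : pt n -> C) :=
  exists e : C, 0 < e /\ forall z, near_pt p e z ->
    cont_at f z /\ forall i, cdiff (fun t => f (shift z i t)) 0.

Definition vholo_at n q (p : pt n) (h : pt n -> 'I_q -> C) :=
  forall k, holo_at p (fun z => h z k).

(* h is, as a germ at p, in the O_{C^n,p}-submodule of O^q_{C^n,p}
   generated by the (possibly infinite) set S *)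
Definition in_span n q (p : pt n) (S : (pt n -> 'I_q -> C) -> Prop)
    (h : pt n -> 'I_q -> C) :=
  exists (m : nat) (g : 'I_m -> pt n -> 'I_q -> C) (a : 'I_m -> pt n -> C),
    (forall j, S (g j)) /\ (forall j, holo_at p (a j)) /\
    exists e : C, 0 < e /\ forall z, near_pt p e z ->
      forall k, h z k = \sum_(j < m) a j z * g j z k.

Definition span_set n q (p : pt n) (S : (pt n -> 'I_q -> C) -> Prop) :=
  fun h => vholo_at p h /\ in_span p S h.

Definition pt0 (n : nat) : pt n := fun _ => 0.
Arguments pt0 : clear implicits.

(* integral closure at p of the submodule generated by S (curve criterion,
   Gaffney's definition): for every analytic curve phi : (C,0) -> (C^n,p),
   h o phi lies in phi^*(M) O_1. *)
Definition in_int_closure n q (p : pt n) (S : (pt n -> 'I_q -> C) -> Prop)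
    (h : pt n -> 'I_q -> C) :=
  vholo_at p h /\
  forall phi : pt 1 -> pt n, vholo_at (pt0 1) phi -> phi (pt0 1) = p ->
    in_span (pt0 1) (fun G => exists g, S g /\ G = (fun t => g (phi t)))
            (fun t => h (phi t)).

Definition pi1 n (z : pt (n + n)) : pt n := fun i => z (lshift n i).
Definition pi2 n (z : pt (n + n)) : pt n := fun i => z (rshift n i).

Definition dbl n q (g : pt n -> 'I_q -> C) : pt (n + n) -> 'I_(q + q) -> C :=
  fun z k => match split k with
             | inl i => g (pi1 z) i
             | inr i => g (pi2 z) i
             end.

Definition double_set n q (N : (pt n -> 'I_q -> C) -> Prop) :=
  fun G => exists g, N g /\ G = dbl g.

Definition vec1 n (f : pt n -> C) : pt n -> 'I_1 -> C := fun z _ => f z.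

Definition ideal_set n (p : pt n) (S : (pt n -> C) -> Prop) :=
  fun f => holo_at p f /\
    in_span p (fun G => exists g, S g /\ G = vec1 g) (vec1 f).

(* Lipschitz saturation of an ideal I (a set of germs at p):
   I_S = {f : f_D in closure(I_D) at (p,p)} *)
Definition pp n (p : pt n) : pt (n + n) :=
  fun k => match split k with inl i => p i | inr i => p i end.

Definition lip_sat n (p : pt n) (I : (pt n -> C) -> Prop) :=
  fun f => holo_at p f /\
    in_int_closure (pp p) (double_set (fun G => exists g, I g /\ G = vec1 g))
                   (dbl (vec1 f)).

Definition det2 n (u v : pt n -> 'I_2 -> C) : pt n -> C :=
  fun z => u z ord0 * v z ord_max - u z ord_max * v z ord0.

Definition J2_gens n m (cols : 'I_m -> pt n -> 'I_2 -> C) :=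
  fun f => exists i j : 'I_m, (i < j)%N /\ f = det2 (cols i) (cols j).

(* (M_{S_1})_p : h_D in closure(M_D) at (p,p), M generated by cols *)
Definition in_MS1 n m (p : pt n) (cols : 'I_m -> pt n -> 'I_2 -> C)
    (h : pt n -> 'I_2 -> C) :=
  in_int_closure (pp p)
    (double_set (span_set p (fun g => exists j, g = cols j))) (dbl h).

(* (M_{S_3})_p : J_2((h,M)) subset (J_2(M))_S at p *)
Definition add_col n m (h : pt n -> 'I_2 -> C) (cols : 'I_m -> pt n -> 'I_2 -> C)
    : 'I_m.+1 -> pt n -> 'I_2 -> C :=
  fun j => match unlift ord0 j with None => h | Some j' => cols j' end.

Definition in_MS3 n m (p : pt n) (cols : 'I_m -> pt n -> 'I_2 -> C)
    (h : pt n -> 'I_2 -> C) :=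
  vholo_at p h /\
  forall f, ideal_set p (J2_gens (add_col h cols)) f ->
            lip_sat p (ideal_set p (J2_gens cols)) f.

Definition xc (z : pt 2) : C := z ord0.
Definition yc (z : pt 2) : C := z ord_max.

Definition col2 (a b : pt 2 -> C) : pt 2 -> 'I_2 -> C :=
  fun z k => if k == ord0 then a z else b z.

Definition Mcols : 'I_3 -> pt 2 -> 'I_2 -> C :=
  fun j => if j == 0%N :> nat then col2 xc yc
           else if j == 1%N :> nat then col2 (fun _ => 0) xc
           else col2 yc (fun _ => 0).

Definition hex : pt 2 -> 'I_2 -> C := col2 xc (fun z => 3%:R * yc z).

End Germs.

(* Main.v *)
Require Import Defs.
From mathcomp Require Import all_boot all_order all_algebra complex reals.
From mathcomp Require Import ring.
From Stdlib Require Import FunctionalExtensionality IndefiniteDescription.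
Set Implicit Arguments. Unset Strict Implicit. Unset Printing Implicit Defensive.
Import Order.TTheory GRing.Theory Num.Theory.
Local Open Scope ring_scope.
Local Open Scope complex_scope.

Section Aux.
Variable R : realType.
Local Notation C := (R[i]).

Definition ev (P : C -> Prop) := exists d : C, 0 < d /\ forall t : C, `|t| < d -> P t.

Lemma min_pos (d1 d2 : C) : 0 < d1 -> 0 < d2 -> exists d, 0 < d /\ d <= d1 /\ d <= d2.
Proof.
move=> h1 h2; have := real_leVge (gtr0_real h1) (gtr0_real h2).
case/orP=> h; [exists d1 | exists d2]; by rewrite ?lexx.
Qed.

Lemma ev_and P Q : ev P -> ev Q -> ev (fun t => P t /\ Q t).
Proof.
move=> [d1 [h1 H1]] [d2 [h2 H2]]; have [d [hd [l1 l2]]] := min_pos h1 h2.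
exists d; split => // t ht; split; [apply: H1|apply: H2]; exact: lt_le_trans ht _.
Qed.

Lemma ev_mono (P Q : C -> Prop) : (forall t, P t -> Q t) -> ev P -> ev Q.
Proof. move=> PQ [d [h H]]; exists d; split => // t /H; exact: PQ. Qed.

Lemma ev_seq (T : eqType) (P : T -> C -> Prop) (s : seq T) :
  (forall i, ev (P i)) -> ev (fun t => forall i, i \in s -> P i t).
Proof.
move=> H; elim: s => [|x s IH].
  by exists 1; split => // t _ i.
apply: ev_mono (ev_and (H x) IH) => t [h1 h2] i; rewrite inE => /orP[/eqP->//|].
exact: h2.
Qed.

Lemma ev_fin m (P : 'I_m -> C -> Prop) :
  (forall i, ev (P i)) -> ev (fun t => forall i, P i t).
Proof.
move=> H; apply: ev_mono (ev_seq (enum 'I_m) H) => t h i; apply: h; by rewrite mem_enum.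
Qed.

Lemma ev_pt P : ev P -> exists t : C, t != 0 /\ P t.
Proof.
move=> [d [hd H]]; exists (d / 2%:R); split.
  by rewrite mulf_neq0 ?invr_eq0 ?pnatr_eq0 // gt_eqF.
apply: H; rewrite normrM normfV (gtr0_norm hd) normr_nat.
by rewrite ltr_pdivrMr ?ltr0n // ltr_pMr // ltr1n.
Qed.

Definition smallw (rho : C -> C) (f : C -> C) :=
  forall eps : C, 0 < eps -> ev (fun t => `|f t| <= eps * rho t).

Lemma smallw_ext rho f g : ev (fun t => f t = g t) -> smallw rho g -> smallw rho f.
Proof.
move=> E H eps he; apply: ev_mono (ev_and E (H eps he)) => t [-> //].
Qed.

Lemma smallw_norm rho f : smallw rho f -> smallw rho (fun t => `|f t|).
Proof. by move=> H eps he; apply: ev_mono (H eps he) => t; rewrite normr_id. Qed.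

Lemma smallw_sum rho m (f : 'I_m -> C -> C) : (forall t, 0 <= rho t) ->
  (forall i, smallw rho (f i)) -> smallw rho (fun t => \sum_(i < m) f i t).
Proof.
move=> rp H eps he.
have he' : 0 < eps / m.+1%:R by rewrite divr_gt0 ?ltr0n.
apply: ev_mono (ev_fin (fun i => H i _ he')) => t Ht.
apply: le_trans (ler_norm_sum _ _ _) _.
apply: le_trans (ler_sum _ (fun i _ => Ht i)) _.
rewrite sumr_const card_ord.
have hr : 0 <= eps / m.+1%:R * rho t by apply: mulr_ge0 => //; apply: ltW.
have -> : eps * rho t = (eps / m.+1%:R * rho t) *+ m.+1.
  by rewrite -mulr_natr mulrAC divfK // pnatr_eq0.
by apply: ler_wpMn2l.
Qed.

Lemma smallw_mul rho f g (K : C) : (forall t, 0 <= rho t) -> 0 <= K ->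
  ev (fun t => `|g t| <= K) -> smallw rho f -> smallw rho (fun t => g t * f t).
Proof.
move=> rp K0 Hg H eps he.
have hK : 0 < K + 1 by rewrite ltr_wpDl.
have he' : 0 < eps / (K + 1) by rewrite divr_gt0.
apply: ev_mono (ev_and Hg (H _ he')) => t [h1 h2].
rewrite normrM; apply: le_trans (ler_pM _ _ h1 h2) _ => //.
rewrite mulrA; apply: ler_wpM2r => //.
rewrite mulrCA -[leRHS]mulr1; apply: ler_wpM2l; first exact: ltW.
by rewrite ler_pdivrMr // mul1r lerDl.
Qed.

End Aux.

Section Holo.
Variable R : realType.
Local Notation C := (R[i]).

Lemma scale_small (c u eps : C) : 0 < eps -> `|u| < eps / (`|c| + 1) -> `|c * u| < eps.
Proof.
move=> he; have hk : 0 < `|c| + 1 by rewrite ltr_wpDl.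
rewrite ltr_pdivlMr // normrM => h; apply: le_lt_trans h.
rewrite mulrC; apply: ler_wpM2l => //; by rewrite lerDl.
Qed.

Lemma cdiff_cst (c : C) : cdiff (fun _ => c) 0.
Proof.
exists 0 => eps he; exists 1; split => // t _; by rewrite subrr mul0r subr0 normr0.
Qed.

Lemma cdiff_id (a : C) : cdiff (fun t => a + t) 0.
Proof.
exists 1 => eps he; exists 1; split => // t /andP[ht _].
have -> : a + (0 + t) - (a + 0) = t by ring.
rewrite divff ?subrr ?normr0 //.
by rewrite -normr_gt0.
Qed.

Lemma cdiff_scale (c : C) g : cdiff g 0 -> cdiff (fun t => c * g t) 0.
Proof.
move=> [l Hl]; exists (c * l) => eps he.
have hk : 0 < `|c| + 1 by rewrite ltr_wpDl.
have [d [hd Hd]] := Hl (eps / (`|c| + 1)) (divr_gt0 he hk).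
exists d; split => // t ht.
have -> : (c * g (0 + t) - c * g 0) / t - c * l = c * ((g (0 + t) - g 0) / t - l).
  by rewrite mulrBr mulrA mulrBr.
exact: scale_small (Hd t ht).
Qed.

Lemma holo_cst n (p : pt R n) (c : C) : holo_at p (fun _ => c).
Proof.
exists 1; split => // z _; split => [eps he|i]; last exact: cdiff_cst.
by exists 1; split => // w _; rewrite subrr normr0.
Qed.

Lemma holo_proj n (p : pt R n) (i : 'I_n) : holo_at p (fun z => z i).
Proof.
exists 1; split => // z _; split => [eps he|j].
  by exists eps; split => // w /(_ i).
rewrite /shift; case: eqP => _; [exact: cdiff_id | exact: cdiff_cst].
Qed.

Lemma holo_scale n (p : pt R n) (c : C) f : holo_at p f -> holo_at p (fun z => c * f z).
Proof.
move=> [e [he H]]; exists e; split => // z /H [Hc Hd]; split => [eps hep|i].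
  have hk : 0 < `|c| + 1 by rewrite ltr_wpDl.
  have [d [hd Hd']] := Hc _ (divr_gt0 hep hk).
  exists d; split => // w /Hd' h; rewrite -mulrBr; exact: scale_small h.
exact: cdiff_scale.
Qed.

Lemma holo_cont n (p : pt R n) f : holo_at p f -> cont_at f p.
Proof. move=> [e [he H]]; apply: (proj1 (H p _)) => i; by rewrite subrr normr0. Qed.

Lemma split_l n (i : 'I_n) : split (lshift n i) = inl i.
Proof. exact: (unsplitK (inl i)). Qed.
Lemma split_r n (i : 'I_n) : split (rshift n i) = inr i.
Proof. exact: (unsplitK (inr i)). Qed.

Lemma pp_l n (p : pt R n) i : pp p (lshift n i) = p i.
Proof. by rewrite /pp split_l. Qed.
Lemma pp_r n (p : pt R n) i : pp p (rshift n i) = p i.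
Proof. by rewrite /pp split_r. Qed.

Lemma cdiff_ext (g h : C -> C) : (forall t, g t = h t) -> cdiff h 0 -> cdiff g 0.
Proof.
move=> E; have -> // : g = h by apply: functional_extensionality.
Qed.

Lemma pi1_shift_l n (z : pt R (n+n)) j t : pi1 (shift z (lshift n j) t) = shift (pi1 z) j t.
Proof. apply: functional_extensionality => k; by rewrite /pi1 /shift eq_lshift. Qed.
Lemma pi1_shift_r n (z : pt R (n+n)) j t : pi1 (shift z (rshift n j) t) = pi1 z.
Proof. apply: functional_extensionality => k; by rewrite /pi1 /shift eq_lrshift. Qed.
Lemma pi2_shift_l n (z : pt R (n+n)) j t : pi2 (shift z (lshift n j) t) = pi2 z.
Proof. apply: functional_extensionality => k; by rewrite /pi2 /shift eq_rlshift. Qed.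
Lemma pi2_shift_r n (z : pt R (n+n)) j t : pi2 (shift z (rshift n j) t) = shift (pi2 z) j t.
Proof. apply: functional_extensionality => k; by rewrite /pi2 /shift eq_rshift. Qed.

Lemma holo_pi1 n (p : pt R n) f : holo_at p f -> holo_at (pp p) (fun z => f (pi1 z)).
Proof.
move=> [e [he H]]; exists e; split => // z hz.
have hz1 : near_pt p e (pi1 z) by move=> i; have := hz (lshift n i); rewrite pp_l.
have [Hc Hd] := H _ hz1; split => [eps hep|i].
  have [d [hd Hd']] := Hc _ hep; exists d; split => // w hw; apply: Hd' => i; exact: hw.
rewrite -(splitK i); case: (split i) => j /=.
  by apply: cdiff_ext (Hd j) => t; rewrite pi1_shift_l.
by apply: cdiff_ext (cdiff_cst _) => t; rewrite pi1_shift_r.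
Qed.

Lemma holo_pi2 n (p : pt R n) f : holo_at p f -> holo_at (pp p) (fun z => f (pi2 z)).
Proof.
move=> [e [he H]]; exists e; split => // z hz.
have hz1 : near_pt p e (pi2 z) by move=> i; have := hz (rshift n i); rewrite pp_r.
have [Hc Hd] := H _ hz1; split => [eps hep|i].
  have [d [hd Hd']] := Hc _ hep; exists d; split => // w hw; apply: Hd' => i; exact: hw.
rewrite -(splitK i); case: (split i) => j /=.
  by apply: cdiff_ext (cdiff_cst _) => t; rewrite pi2_shift_l.
by apply: cdiff_ext (Hd j) => t; rewrite pi2_shift_r.
Qed.

Lemma vholo_dbl n q (p : pt R n) (g : pt R n -> 'I_q -> C) :
  vholo_at p g -> vholo_at (pp p) (dbl g).
Proof.
move=> H k; rewrite /dbl -(splitK k); case: (split k) => j /=.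
  rewrite split_l; exact: (holo_pi1 (H j)).
rewrite split_r; exact: (holo_pi2 (H j)).
Qed.

End Holo.

Section S.
Variable R : realType.
Local Notation C := (R[i]).

Lemma add_col0 n m (h : pt R n -> 'I_2 -> C) cols : @add_col R n m h cols ord0 = h.
Proof. by rewrite /add_col unlift_none. Qed.
Lemma add_colS n m (h : pt R n -> 'I_2 -> C) cols j : @add_col R n m h cols (lift ord0 j) = cols j.
Proof. by rewrite /add_col liftK. Qed.

Lemma r1 (a b : C) : a * b - 3%:R * b * a = 2%:R * (0 * 0 - a * b). Proof. ring. Qed.
Lemma r2 (a b : C) : a * a - 3%:R * b * 0 = 1 * (a * a - b * 0). Proof. ring. Qed.
Lemma r3 (a b : C) : a * 0 - 3%:R * b * b = 3%:R * (a * 0 - b * b). Proof. ring. Qed.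
Definition o3 (k : nat) (H : (k < 3)%N) : 'I_3 := Ordinal H.

Lemma gen_J2 (g : pt R 2 -> C) : J2_gens (add_col (hex (R:=R)) (Mcols (R:=R))) g ->
  exists (c : C) g', J2_gens (Mcols (R:=R)) g' /\ forall z, g z = c * g' z.
Proof.
move=> [i [j [lij ->]]].
case: (unliftP ord0 j) lij => [j'|] -> lij; last by move: lij; rewrite /= ltn0.
rewrite add_colS.
case: (unliftP ord0 i) lij => [i'|] -> lij.
  rewrite add_colS; exists 1, (det2 (Mcols i') (Mcols j')); split.
    by exists i', j'; split => //; move: lij; rewrite /= /bump /= !add1n.
  by move=> z; rewrite mul1r.
rewrite add_col0.
case: j' {lij} => [[|[|[|k]]] hk] //.
- exists 2%:R, (det2 (Mcols (@o3 1 isT)) (Mcols (@o3 2 isT))); split.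
    by exists (o3 (k:=1) isT), (o3 (k:=2) isT).
  move=> z; rewrite /det2 /Mcols /hex /col2 /=. exact: r1.
- exists 1, (det2 (Mcols (@o3 0 isT)) (Mcols (@o3 1 isT))); split.
    by exists (o3 (k:=0) isT), (o3 (k:=1) isT).
  move=> z; rewrite /det2 /Mcols /hex /col2 /=. exact: r2.
- exists 3%:R, (det2 (Mcols (@o3 0 isT)) (Mcols (@o3 2 isT))); split.
    by exists (o3 (k:=0) isT), (o3 (k:=2) isT).
  move=> z; rewrite /det2 /Mcols /hex /col2 /=. exact: r3.
Qed.
End S.

Section S2.
Variable R : realType.
Local Notation C := (R[i]).

Lemma ideal_trans f : ideal_set (@pt0 R 2) (J2_gens (add_col (hex (R:=R)) (Mcols (R:=R)))) f ->
  ideal_set (@pt0 R 2) (J2_gens (Mcols (R:=R))) f.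
Proof.
move=> [hf [m [g [a [Hg [Ha [e [he E]]]]]]]].
have Hc : forall j, exists cg : C * (pt R 2 -> C), J2_gens (Mcols (R:=R)) cg.2 /\
    forall z k, g j z k = cg.1 * vec1 cg.2 z k.
  move=> j; have [g0 [Hg0 ->]] := Hg j; have [c [g' [H1 H2]]] := gen_J2 Hg0.
  by exists (c, g'); split => // z k; rewrite /vec1 H2.
pose cg j := proj1_sig (constructive_indefinite_description _ (Hc j)).
have Pcg j := proj2_sig (constructive_indefinite_description _ (Hc j)).
split => //; exists m, (fun j => vec1 (cg j).2), (fun j z => (cg j).1 * a j z); split; [|split].
- move=> j; exists (cg j).2; split => //; exact: (proj1 (Pcg j)).
- move=> j; exact: holo_scale.
- exists e; split => // z hz k; rewrite E //; apply: eq_bigr => j _.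
  by rewrite (proj2 (Pcg j)) mulrA [a j z * _]mulrC.
Qed.

Lemma lip_of n (p : pt R n) (I : (pt R n -> C) -> Prop) f :
  holo_at p f -> I f -> lip_sat p I f.
Proof.
move=> hf If; split => //; split.
  by apply: vholo_dbl => k.
move=> phi _ _; exists 1%N, (fun _ t => dbl (vec1 f) (phi t)), (fun _ _ => 1); split; [|split].
- move=> _; exists (dbl (vec1 f)); split => //; exists (vec1 f); split => //; by exists f.
- move=> _; exact: holo_cst.
- by exists 1; split => // z _ k; rewrite big_ord1 mul1r.
Qed.

Lemma vholo_hex : vholo_at (@pt0 R 2) (hex (R:=R)).
Proof.
move=> k; rewrite /hex /col2; case: (k == ord0).
  exact: holo_proj.
exact: (holo_scale _ (holo_proj _ _)).
Qed.

Lemma part1 : in_MS3 (@pt0 R 2) (Mcols (R:=R)) (hex (R:=R)).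
Proof.
split; first exact: vholo_hex.
move=> f Hf; exact: lip_of (proj1 Hf) (ideal_trans Hf).
Qed.
End S2.

Section S3.
Variable R : realType.
Local Notation C := (R[i]).

Definition tp (t : C) : pt R 1 := fun _ => t.
Definition phi (t : pt R 1) : pt R (2 + 2) :=
  fun k => if k == lshift 2 ord_max then 0 else t ord0.
Definition Fv (w : pt R 1 -> 'I_(2 + 2) -> C) (t : C) : C :=
  w (tp t) (rshift 2 ord_max) - w (tp t) (lshift 2 ord0) - w (tp t) (lshift 2 ord_max).

Lemma phi_vholo : vholo_at (@pt0 R 1) phi.
Proof.
move=> k; rewrite /phi; case: (k == _); [exact: holo_cst | exact: holo_proj].
Qed.

Lemma phi_pt0 : phi (@pt0 R 1) = pp (@pt0 R 2).
Proof.
apply: functional_extensionality => k; rewrite /phi /pp /pt0.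
by case: (split k) => ?; case: (_ == _).
Qed.

Definition w1 (t : C) : pt R 2 := pi1 (phi (tp t)).
Definition w2 (t : C) : pt R 2 := pi2 (phi (tp t)).

Lemma w1_0 t : w1 t ord0 = t.
Proof. by rewrite /w1 /pi1 /phi eq_lshift. Qed.
Lemma w1_1 t : w1 t ord_max = 0.
Proof. by rewrite /w1 /pi1 /phi eq_lshift eqxx. Qed.
Lemma w2_i t i : w2 t i = t.
Proof. by rewrite /w2 /pi2 /phi eq_rlshift. Qed.

Lemma w1_le t i : `|w1 t i| <= `|t|.
Proof.
have : i = ord0 \/ i = ord_max.
  case: i => [[|[|k]] hk]; [left|right|by []]; exact: val_inj.
by case=> ->; rewrite ?w1_0 ?w1_1 ?normr0.
Qed.

Lemma col_id (j : 'I_3) t :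
  Mcols j (w2 t) ord_max = Mcols j (w1 t) ord0 + Mcols j (w1 t) ord_max /\
  `|Mcols j (w2 t) ord_max| <= `|t|.
Proof.
case: j => [[|[|[|k]]] hk] //; rewrite /Mcols /col2 /xc /yc /= ?w2_i ?w1_0 ?w1_1;
  by rewrite ?addr0 ?add0r ?lexx ?normr0.
Qed.

Lemma rid (a2 a1 c0 c1 : C) : a2*(c0+c1) - a1*c0 - a1*c1 = (a2 - a1)*(c0+c1).
Proof. ring. Qed.

Lemma smallw_dom (rho f s : C -> C) : (forall t, 0 <= rho t) ->
  ev (fun t => `|f t| <= `|s t| * rho t) -> smallw (fun _ => 1) s -> smallw rho f.
Proof.
move=> rp E H eps he; apply: ev_mono (ev_and E (H eps he)) => t [h1 h2].
apply: le_trans h1 _; apply: ler_wpM2r => //; by rewrite mulr1 in h2.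
Qed.

Lemma small_diff (a : pt R 2 -> C) : cont_at a (@pt0 R 2) ->
  smallw (fun _ => 1) (fun t => a (w2 t) - a (w1 t)).
Proof.
move=> Hc eps he.
have he2 : 0 < eps / 2%:R by rewrite divr_gt0 ?ltr0n.
have [d [hd Hd]] := Hc _ he2; exists d; split => // t ht.
have n1 : near_pt (@pt0 R 2) d (w1 t) by move=> i; rewrite /pt0 subr0; exact: le_lt_trans (w1_le t i) ht.
have n2 : near_pt (@pt0 R 2) d (w2 t) by move=> i; rewrite /pt0 subr0 w2_i.
have -> : a (w2 t) - a (w1 t) = (a (w2 t) - a (@pt0 R 2)) - (a (w1 t) - a (@pt0 R 2)).
  by rewrite opprB addrA subrK.
apply: le_trans (ler_normB _ _) _; rewrite mulr1.
have -> : eps = eps / 2%:R + eps / 2%:R by rewrite -splitr.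
by apply: lerD; apply: ltW; [exact: Hd n2 | exact: Hd n1].
Qed.

Lemma Lgen gg : span_set (@pt0 R 2) (fun g => exists j, g = Mcols j) gg ->
  smallw (fun t => `|t|) (Fv (fun t => dbl gg (phi t))).
Proof.
move=> [_ [m [cs [a [Hcs [Ha [e [he E]]]]]]]].
apply: (smallw_dom (s := fun t => \sum_(i < m) `|a i (w2 t) - a i (w1 t)|)).
- by move=> t.
- exists e; split => // t ht.
  have n1 : near_pt (@pt0 R 2) e (w1 t) by move=> i; rewrite /pt0 subr0; exact: le_lt_trans (w1_le t i) ht.
  have n2 : near_pt (@pt0 R 2) e (w2 t) by move=> i; rewrite /pt0 subr0 w2_i.
  rewrite /Fv /dbl !split_r !split_l -/(w1 t) -/(w2 t).
  rewrite (E _ n2) (E _ n1) (E _ n1) -!sumrB.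
  rewrite (ger0_norm (sumr_ge0 _ (fun i _ => normr_ge0 _))) mulr_suml.
  apply: le_trans (ler_norm_sum _ _ _) _; apply: ler_sum => i _.
  have [j ->] := Hcs i; have [ci cb] := col_id j t.
  have -> : a i (w2 t) * Mcols j (w2 t) ord_max - a i (w1 t) * Mcols j (w1 t) ord0 -
     a i (w1 t) * Mcols j (w1 t) ord_max = (a i (w2 t) - a i (w1 t)) * Mcols j (w2 t) ord_max.
    by rewrite ci; apply: rid.
  rewrite normrM; apply: ler_wpM2l => //.
- apply: smallw_sum => [t|i]; first by [].
  apply: smallw_norm; apply: small_diff; exact: holo_cont.
Qed.

End S3.

Section S4.
Variable R : realType.
Local Notation C := (R[i]).

Lemma bnd_cont (a : pt R 1 -> C) : cont_at a (@pt0 R 1) ->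
  exists K : C, 0 <= K /\ ev (fun t => `|a (tp t)| <= K).
Proof.
move=> Hc; have [d [hd Hd]] := Hc 1 ltr01.
exists (`|a (@pt0 R 1)| + 1); split; first by rewrite addr_ge0.
exists d; split => // t ht.
have : near_pt (@pt0 R 1) d (tp t) by move=> i; rewrite /pt0 /tp subr0.
move/Hd => h.
have -> : a (tp t) = a (@pt0 R 1) + (a (tp t) - a (@pt0 R 1)) by rewrite addrC subrK.
apply: le_trans (ler_normD _ _) _; rewrite lerD2l; exact: ltW.
Qed.

Lemma r4 (t : C) : 3%:R * t - t - 3%:R * 0 = 2%:R * t. Proof. ring. Qed.
Lemma r5 (a b c d : C) : a * b - a * c - a * d = a * (b - c - d). Proof. ring. Qed.

Lemma Fh t : Fv (fun t => dbl (hex (R:=R)) (phi t)) t = 2%:R * t.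
Proof.
rewrite /Fv /dbl !split_r !split_l /hex /col2 /xc /yc /=.
rewrite /pi1 /pi2 /phi eq_rlshift !eq_lshift /=.
rewrite /tp; exact: r4.
Qed.

Lemma part2 : ~ in_MS1 (@pt0 R 2) (Mcols (R:=R)) (hex (R:=R)).
Proof.
move=> [_ H]; have := H (@phi R) (@phi_vholo R) (@phi_pt0 R).
move=> [m [g [a [Hg [Ha [e [he E]]]]]]].
have Hj : forall j, smallw (fun t => `|t|) (Fv (g j)).
  move=> j; have [g0 [[gg [Hgg ->]] ->]] := Hg j; exact: Lgen.
have Hs : smallw (fun t => `|t|) (fun t => \sum_(j < m) a j (tp t) * Fv (g j) t).
  apply: smallw_sum => [t|j]; first by [].
  have [K [K0 HK]] := bnd_cont (holo_cont (Ha j)).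
  exact: smallw_mul K0 HK (Hj j).
have H2 : smallw (fun t : C => `|t|) (fun t : C => 2%:R * t).
  refine (smallw_ext _ Hs); exists e; split => // t ht.
  have nt : near_pt (@pt0 R 1) e (tp t) by move=> i; rewrite /pt0 /tp subr0.
  rewrite -(Fh t) /Fv !E // -!sumrB; apply: eq_bigr => j _; exact: r5.
have [t [t0 Ht]] := ev_pt (H2 1 ltr01).
move: Ht; rewrite mul1r normrM normr_nat -subr_le0 -{2}(mul1r `|t|) -mulrBl.
rewrite pmulr_rle0 ?normr_gt0 //.
  by rewrite normr_le0 (negbTE t0).
by rewrite subr_gt0 ltr1n.
Qed.
End S4.

Theorem mainTheorem16 (R : realType) :
  in_MS3 (@pt0 R 2) (Mcols (R:=R)) (hex (R:=R)) /\
  ~ in_MS1 (@pt0 R 2) (Mcols (R:=R)) (hex (R:=R)).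
Proof. split; [exact: part1 | exact: part2]. Qed.
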